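(* Let $P$ be an operad and $n\ge1$. The complex $(\Omega(PA),d)$ is exact, i.e. has zero cohomology in every degree.
   Context: All vector spaces over $\mathbb{Q}$. An operad consists of vector spaces $P[j]$ with $\Sigma_j$-actions, $P[0]=0$, with associative equivariant substitution and a unit (only the species structure is used below). Let $W$ be the super vector space with even basis $x_1,\dots,x_n$ and odd basis $dx_1,\dots,dx_n$. Set $\Omega(PA)=\bigoplus_{j\ge1}(P[j]\otimes W^{\otimes j})_{\Sigma_j}$, where $\Sigma_j$ acts on $W^{\otimes j}$ by permuting factors with the Koszul sign rule (transposing two odd factors gives a sign); it is $\mathbb{Z}$-graded by the number of odd factors, with $\Omega^0(PA)=PA=\bigoplus_{j\ge1}(P[j]\otimes V^{\otimes j})_{\Sigma_j}$, $V=\mathrm{span}(x_i)$. The differential is $d(p\otimes w_1\otimes\cdots\otimes w_j)=\sum_{k=1}^j(-1)^{\epsilon_k}\,p\otimes w_1\otimes\cdots\otimes d(w_k)\otimes\cdots\otimes w_j$, where $d(x_i)=dx_i$, $d(dx_i)=0$ and $\epsilon_k$ is the number of odd $w_l$ with $l<k$ (so $d$ is the odd superderivation of the free $P$-superalgebra with $d^2=0$). *)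

(* Defs.v *)
From HB Require Import structures.
From mathcomp Require Import all_boot all_order all_fingroup all_algebra.
Set Implicit Arguments. Unset Strict Implicit. Unset Printing Implicit Defensive.
Import GRing.Theory.
Local Open Scope ring_scope.

(** A species of Q-vector spaces: P[j] with a linear (right) Sigma_j-action.
    (mathcomp's permutation product is left-to-right: (s * t) x = t (s x),
    so the natural actions are right actions.) *)
Record species := Species {
  sp_obj :> nat -> lmodType rat;
  sp_act : forall j, sp_obj j -> 'S_j -> sp_obj j;
  sp_act1 : forall j (p : sp_obj j), sp_act p 1%g = p;
  sp_actM : forall j (p : sp_obj j) (s t : 'S_j),
      sp_act p (s * t)%g = sp_act (sp_act p s) t;
  sp_actlin : forall j (s : 'S_j) (a : rat) (p q : sp_obj j),
      sp_act (a *: p + q) s = a *: sp_act p s + sp_act q s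
}.

(** Basis letters of W: (i, false) = x_i (even), (i, true) = dx_i (odd). *)
Definition letter (n : nat) := ('I_n * bool)%type.
(** Basis words of W^{(x)j}: w_1 (x) ... (x) w_j. *)
Definition word (n j : nat) := {ffun 'I_j -> letter n}.

(** P[j] (x) W^{(x)j}, written in the basis of W^{(x)j}. *)
Definition T (P : species) (n j : nat) := {ffun word n j -> P j}.

Definition pt (P : species) n j (w : word n j) (p : P j) : T P n j :=
  [ffun v => if v == w then p else 0].

(** Right action of Sigma_j on words: the factor in position a moves to
    position s a. *)
Definition wact n j (w : word n j) (s : 'S_j) : word n j :=
  [ffun k => w ((s^-1)%g k)].

Definition ksign n j (s : 'S_j) (w : word n j) : rat :=
  (-1) ^+ #|[set ab : 'I_j * 'I_j |
              [&& (ab.1 < ab.2)%N, (w ab.1).2, (w ab.2).2 & (s ab.2 < s ab.1)%N]]|.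

(** Generators of the relations defining the Sigma_j-coinvariants
    (diagonal action with Koszul sign): s.(p (x) w) - p (x) w. *)
Definition relgen (P : species) n j (s : 'S_j) (w : word n j) (p : P j)
  : T P n j :=
  ksign s w *: pt (wact w s) (sp_act p s) - pt w p.

(** Membership in the span of the relations (the kernel of the projection
    to coinvariants). *)
Definition inK_j (P : species) n j (c : T P n j) : Prop :=
  exists l : seq ('S_j * word n j * P j),
    c = \sum_(x <- l) relgen x.1.1 x.1.2 x.2.

Definition nodd_before n j (w : word n j) (k : 'I_j) : nat :=
  #|[set l : 'I_j | (l < k)%N && (w l).2]|.
Definition nodd n j (w : word n j) : nat := #|[set l : 'I_j | (w l).2]|.

Definition setodd n j (w : word n j) (k : 'I_j) : word n j :=
  [ffun l => if l == k then ((w k).1, true) else w l].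

Definition dT (P : species) n j (c : T P n j) : T P n j :=
  \sum_(w : word n j) \sum_(k < j | ~~ (w k).2)
     ((-1) ^+ nodd_before w k : rat) *: pt (setodd w k) (c w).

(** Representatives: families (c_j)_j with c_j in P[j] (x) W^{(x)j},
    finitely supported (direct sum). *)
Definition Om (P : species) (n : nat) := forall j, T P n j.
Definition finsupp P n (c : Om P n) : Prop :=
  exists N, forall j, (N <= j)%N -> c j = 0.
(** c represents 0 in Omega(PA) = (+)_j (P[j] (x) W^{(x)j})_{Sigma_j}. *)
Definition inK P n (c : Om P n) : Prop := forall j, inK_j (c j).
Definition dOm P n (c : Om P n) : Om P n := fun j => dT (c j).
Definition homog P n (k : nat) (c : Om P n) : Prop :=
  forall j (w : word n j), c j w != 0 -> nodd w = k.

(* Main.v *)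
Require Import Defs.
From mathcomp Require Import all_boot all_order all_fingroup all_algebra.
From mathcomp Require Import zify.
Import Num.Theory.
Set Implicit Arguments. Unset Strict Implicit. Unset Printing Implicit Defensive.
Import GRing.Theory.
Local Open Scope ring_scope.

Section Aux.
Variables (P : species) (n j : nat).
Implicit Types (v w : word n j) (k l : 'I_j).

Definition seteven v k : word n j :=
  [ffun l => if l == k then ((v k).1, false) else v l].

Lemma setoddE v k l : setodd v k l = if l == k then ((v k).1, true) else v l.
Proof. by rewrite /setodd ffunE. Qed.
Lemma setevenE v k l : seteven v k l = if l == k then ((v k).1, false) else v l.
Proof. by rewrite /seteven ffunE. Qed.

Lemma setodd_id v k : (v k).2 -> setodd v k = v.
Proof.
move=> h; apply/ffunP=> l; rewrite setoddE; case: eqP => // ->.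
by case: (v k) h => a b /= ->.
Qed.
Lemma seteven_id v k : ~~ (v k).2 -> seteven v k = v.
Proof.
move=> h; apply/ffunP=> l; rewrite setevenE; case: eqP => // ->.
by case: (v k) h => a [] /=.
Qed.
Lemma seteven_odd v k : seteven (setodd v k) k = seteven v k.
Proof. by apply/ffunP=> l; rewrite !setevenE !setoddE eqxx; case: eqP. Qed.
Lemma setodd_even v k : setodd (seteven v k) k = setodd v k.
Proof. by apply/ffunP=> l; rewrite !setoddE !setevenE eqxx; case: eqP. Qed.
Lemma setodd_k v k : (setodd v k k).2. Proof. by rewrite setoddE eqxx. Qed.
Lemma seteven_k v k : ~~ (seteven v k k).2. Proof. by rewrite setevenE eqxx. Qed.
Lemma setodd_ne v k l : l != k -> setodd v k l = v l.
Proof. by rewrite setoddE => /negbTE ->. Qed.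
Lemma seteven_ne v k l : l != k -> seteven v k l = v l.
Proof. by rewrite setevenE => /negbTE ->. Qed.
Lemma setodd_seteven_comm v k l : k != l ->
  seteven (setodd v l) k = setodd (seteven v k) l.
Proof.
move=> kl; apply/ffunP=> m; rewrite !(setevenE, setoddE).
by repeat (case: eqP => //= ?; subst); rewrite eqxx in kl.
Qed.

Lemma card_setE (T : finType) (p : pred T) : #|[set x | p x]| = (\sum_x (p x : nat))%N.
Proof.
rewrite -sum1_card big_mkcond /=; apply: eq_bigr => x _.
by rewrite in_set; case: (p x).
Qed.

Lemma count_seteven (Q : pred 'I_j) v k :
  #|[set l | Q l && (v l).2]| =
  (#|[set l | Q l && (seteven v k l).2]| + (Q k && (v k).2))%N.
Proof.
rewrite !card_setE (bigD1 k) //= [in RHS](bigD1 k) //= (negbTE (seteven_k v k)) andbF add0n addnC.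
congr (_ + _)%N; apply: eq_bigr => l lk; by rewrite seteven_ne.
Qed.

Lemma nb_seteven v k l : nodd_before v l =
  (nodd_before (seteven v k) l + ((k < l)%N && (v k).2))%N.
Proof. exact: (count_seteven (fun m : 'I_j => (m < l)%N)). Qed.

Lemma nodd_seteven v k : nodd v = (nodd (seteven v k) + (v k).2)%N.
Proof.
have := count_seteven predT v k; rewrite /nodd /=.
have e : forall w : word n j, [set l | true && (w l).2] = [set l | (w l).2].
  by move=> w; apply/setP=> l; rewrite !in_set.
by rewrite !e.
Qed.


Definition sgn (m : nat) : rat := (-1) ^+ m.

Lemma seteven_setodd_eq v w k :
  (~~ (w k).2 && (v == setodd w k)) = ((v k).2 && (w == seteven v k)).
Proof.
apply/andP/andP=> [[wk /eqP ->]|[vk /eqP ->]]; split.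
- exact: setodd_k.
- by rewrite seteven_odd seteven_id.
- exact: seteven_k.
- by rewrite setodd_even setodd_id.
Qed.

Lemma dT_coef (c : T P n j) v :
  dT c v = \sum_(k < j | (v k).2) sgn (nodd_before v k) *: c (seteven v k).
Proof.
rewrite /dT sum_ffunE.
under eq_bigr => w _ do rewrite sum_ffunE.
rewrite (exchange_big_dep predT) //= [RHS]big_mkcond /=.
apply: eq_bigr => k _; case: ifP => vk; last first.
  rewrite big1 // => w /= wk; rewrite !ffunE; case: (eqVneq v (setodd w k)) => [vE|]; last by rewrite scaler0.
  by move: vk; rewrite vE setodd_k.
rewrite (bigD1 (seteven v k)) /=; last exact: seteven_k.
rewrite big1 ?addr0.
  rewrite !ffunE setodd_even setodd_id // eqxx.
  by rewrite /sgn (nb_seteven v k k) ltnn addn0.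
move=> w /andP[wk wne]; rewrite !ffunE.
case: (eqVneq v (setodd w k)) => [vE|]; last by rewrite scaler0.
move: wne; rewrite vE seteven_odd seteven_id //.
by rewrite eqxx.
Qed.

Definition hT (c : T P n j) : T P n j :=
  [ffun v : word n j => \sum_(k < j | ~~ (v k).2) sgn (nodd_before v k) *: c (setodd v k)].

Lemma sgnD a b : sgn (a + b) = sgn a * sgn b. Proof. by rewrite /sgn exprD. Qed.
Lemma sgnK a : sgn a * sgn a = 1.
Proof. by rewrite -sgnD addnn /sgn -mul2n exprM sqrrN expr1n. Qed.
Lemma sgn1 : sgn 1 = -1. Proof. by []. Qed.

Lemma nb_setodd v k l :
  nodd_before (setodd v k) l = (nodd_before (seteven v k) l + (k < l))%N.
Proof. by rewrite (nb_seteven _ k) seteven_odd setodd_k andbT. Qed.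

Lemma if_sum (V : zmodType) (b : bool) (F : 'I_j -> V) :
  (if b then \sum_(i < j) F i else 0) = \sum_(i < j) (if b then F i else 0).
Proof. by case: b => //; rewrite big1. Qed.

Lemma homotopy (c : T P n j) : dT (hT c) + hT (dT c) = j%:R *: c.
Proof.
apply/ffunP=> v; rewrite !ffunE dT_coef.
under eq_bigr => k _ do rewrite ffunE scaler_sumr.
under [X in _ + X = _]eq_bigr => l _ do rewrite dT_coef scaler_sumr.
rewrite big_mkcond /= [X in _ + X]big_mkcond /=.
under eq_bigr => k _ do rewrite big_mkcond /= if_sum.
under [X in _ + X]eq_bigr => k _ do rewrite big_mkcond /= if_sum.
rewrite [X in _ + X]exchange_big /= -big_split /=.
have -> : j%:R *: c v = \sum_(k < j) \sum_(l < j) (if k == l then c v else 0).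
  rewrite scaler_nat; transitivity (\sum_(k < j) c v).
    by rewrite sumr_const card_ord.
  apply: eq_bigr => k _.
  by rewrite (bigD1 k) //= eqxx big1 ?addr0 // => l /negbTE; rewrite eq_sym => ->.
apply: eq_bigr => k _; rewrite -big_split /=; apply: eq_bigr => l _.
case: (eqVneq k l) => [<-|kl].
  rewrite (negbTE (seteven_k v k)) setodd_k /= setodd_even seteven_odd.
  have e1 : nodd_before (seteven v k) k = nodd_before v k.
    by rewrite [RHS](nb_seteven v k k) ltnn /= addn0.
  rewrite nb_setodd ltnn addn0 e1.
  case vk: (v k).2 => /=.
    by rewrite setodd_id // scalerA sgnK scale1r addr0.
  by rewrite seteven_id ?vk // scalerA sgnK scale1r add0r.
rewrite seteven_ne 1?eq_sym // setodd_ne //.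
case vk: (v k).2; case vl: (v l).2 => /=; rewrite ?addr0 //.
rewrite setodd_seteven_comm // !scalerA -addrC -scalerDl.
have e2 : nodd_before v l = (nodd_before (seteven v k) l + (k < l))%N.
  by rewrite (nb_seteven v k l) vk andbT.
have e3 : nodd_before (setodd v l) k = (nodd_before v k + (l < k))%N.
  by rewrite nb_setodd seteven_id ?vl.
rewrite e2 e3 -!sgnD.
set a := nodd_before (seteven v k) l; set b := nodd_before v k.
have lk : ((k < l) + (l < k))%N = 1%N.
  have : (k < l)%N || (l < k)%N by rewrite -neq_ltn.
  by case: ltngtP.
have -> : (a + (k < l) + (b + (l < k)))%N = (b + a + 1)%N by lia.
by rewrite sgnD sgn1 mulrN1 addNr scale0r.
Qed.

Lemma nb_seteven_k v k : nodd_before (seteven v k) k = nodd_before v k.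
Proof. by rewrite [RHS](nb_seteven v k k) ltnn /= addn0. Qed.

Lemma hTD (c1 c2 : T P n j) : hT (c1 + c2) = hT c1 + hT c2.
Proof.
apply/ffunP=> v; rewrite !ffunE -big_split /=; apply: eq_bigr => k _.
by rewrite ffunE scalerDr.
Qed.
Lemma hTZ (a : rat) (c : T P n j) : hT (a *: c) = a *: hT c.
Proof.
apply/ffunP=> v; rewrite !ffunE scaler_sumr; apply: eq_bigr => k _.
by rewrite ffunE !scalerA mulrC.
Qed.
Lemma hTN (c : T P n j) : hT (- c) = - hT c.
Proof. by rewrite -scaleN1r hTZ scaleN1r. Qed.
Lemma hTB (c1 c2 : T P n j) : hT (c1 - c2) = hT c1 - hT c2.
Proof. by rewrite hTD hTN. Qed.
Lemma hT0 : hT 0 = 0.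
Proof. by apply/ffunP=> v; rewrite !ffunE big1 // => k _; rewrite ffunE scaler0. Qed.
Lemma hT_sum (I : Type) (r : seq I) (F : I -> T P n j) :
  hT (\sum_(i <- r) F i) = \sum_(i <- r) hT (F i).
Proof. exact: (big_morph _ hTD hT0). Qed.

Lemma ptZ w (a : rat) (p : P j) : pt w (a *: p) = a *: pt w p.
Proof.
apply/ffunP=> v; rewrite !ffunE; case: ifP => _; by rewrite ?scaler0.
Qed.

Lemma hT_pt w (p : P j) :
  hT (pt w p) = \sum_(k < j | (w k).2) sgn (nodd_before w k) *: pt (seteven w k) p.
Proof.
apply/ffunP=> v; rewrite !ffunE sum_ffunE big_mkcond [RHS]big_mkcond /=.
apply: eq_bigr => k _; rewrite !ffunE.
have E := seteven_setodd_eq w v k.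
case: (boolP ((w k).2 && (v == seteven w k))) E => [H|H] E.
  move/andP: (H) => [-> /eqP vE]; move/andP: E => [-> /eqP wE].
  by rewrite eq_sym -wE eqxx vE eqxx nb_seteven_k.
case: ((v k).2) E => /= E.
  by case: ((w k).2) H => //= /negbTE ->; rewrite scaler0.
rewrite eq_sym E scaler0.
by case: ((w k).2) H => //= /negbTE ->; rewrite scaler0.
Qed.


Lemma wact_s w (s : 'S_j) k : wact w s (s k) = w k.
Proof. by rewrite ffunE permK. Qed.

Lemma seteven_wact w (s : 'S_j) k :
  seteven (wact w s) (s k) = wact (seteven w k) s.
Proof.
apply/ffunP=> m; rewrite !ffunE permK.
case: (eqVneq m (s k)) => [->|mk]; first by rewrite permK eqxx.
case: eqP => // E; by move: mk; rewrite -E permKV eqxx.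
Qed.

Lemma sum_delta1 (F : 'I_j -> nat) k :
  (\sum_(b < j) ((b == k) * F b))%N = F k.
Proof.
by rewrite (bigD1 k) //= eqxx mul1n big1 ?addn0 // => b /negbTE ->.
Qed.

Lemma sum_delta_c c k : (\sum_(b < j) ((b == k) * c))%N = c.
Proof.
by rewrite (bigD1 k) //= eqxx mul1n big1 ?addn0 // => b /negbTE ->.
Qed.
Lemma sum_delta_out (h : 'I_j -> nat) k :
  (\sum_(a < j) \sum_(b < j) ((a == k) * h b))%N = (\sum_b h b)%N.
Proof.
rewrite (bigD1 k) //=.
rewrite [X in (_ + X)%N]big1 ?addn0; first by apply: eq_bigr => b _; rewrite eqxx mul1n.
by move=> a /negbTE ->; rewrite big1.
Qed.

Lemma split3 (F G H : 'I_j -> 'I_j -> nat) :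
  (\sum_(a < j) \sum_(b < j) (F a b + G a b + H a b) =
   \sum_(a < j) \sum_(b < j) F a b + \sum_(a < j) \sum_(b < j) G a b
   + \sum_(a < j) \sum_(b < j) H a b)%N.
Proof. by rewrite -!big_split; apply: eq_bigr => a _; rewrite -!big_split. Qed.

Lemma card_pairs (f : 'I_j -> 'I_j -> bool) :
  #|[set ab : 'I_j * 'I_j | f ab.1 ab.2]| = (\sum_a \sum_b (f a b : nat))%N.
Proof. by rewrite card_setE pair_bigA. Qed.

Lemma sign_id (s : 'S_j) w k : (w k).2 ->
  ksign s w * sgn (nodd_before (wact w s) (s k)) =
  sgn (nodd_before w k) * ksign s (seteven w k).
Proof.
move=> wk.
pose O (x : 'I_j) := (w x).2.
pose x1 := (\sum_(a < j) [&& (a < k)%N, O a & (s k < s a)%N])%N.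
pose x2 := (\sum_(b < j) [&& (k < b)%N, O b & (s b < s k)%N])%N.
pose y := (\sum_(a < j) [&& (a < k)%N, O a & (s a < s k)%N])%N.
have hA : #|[set ab : 'I_j * 'I_j |
              [&& (ab.1 < ab.2)%N, (w ab.1).2, (w ab.2).2 & (s ab.2 < s ab.1)%N]]| =
          (#|[set ab : 'I_j * 'I_j |
              [&& (ab.1 < ab.2)%N, (seteven w k ab.1).2, (seteven w k ab.2).2
                & (s ab.2 < s ab.1)%N]]| + x1 + x2)%N.
  rewrite (card_pairs (fun a b => [&& (a < b)%N, (w a).2, (w b).2 & (s b < s a)%N])).
  rewrite (card_pairs (fun a b => [&& (a < b)%N, (seteven w k a).2, (seteven w k b).2
                & (s b < s a)%N])).
  have pw : forall a b : 'I_j,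
    [&& (a < b)%N, (w a).2, (w b).2 & (s b < s a)%N] =
    ([&& (a < b)%N, (seteven w k a).2, (seteven w k b).2 & (s b < s a)%N]
     + (b == k) * [&& (a < k)%N, O a & (s k < s a)%N]
     + (a == k) * [&& (k < b)%N, O b & (s b < s k)%N])%N :> nat.
    move=> a b; rewrite /O.
    case: (eqVneq a k) => [->|ak]; case: (eqVneq b k) => [->|bk].
    - by rewrite ltnn.
    - by rewrite (negbTE (seteven_k w k)) wk /= andbF mul1n mul0n.
    - by rewrite (negbTE (seteven_k w k)) wk !andbF /= mul1n mul0n add0n addn0.
    - by rewrite !seteven_ne // !mul0n !addn0.
  transitivity (\sum_(a < j) \sum_(b < j)
    ([&& (a < b)%N, (seteven w k a).2, (seteven w k b).2 & (s b < s a)%N]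
     + (b == k) * [&& (a < k)%N, O a & (s k < s a)%N]
     + (a == k) * [&& (k < b)%N, O b & (s b < s k)%N]))%N.
    by apply: eq_bigr => a _; apply: eq_bigr => b _; exact: pw.
  rewrite split3; congr (_ + _ + _)%N.
    by apply: eq_bigr => a _; rewrite sum_delta_c.
  exact: sum_delta_out.
have h1 : nodd_before w k = (y + x1)%N.
  rewrite /nodd_before card_setE -big_split /=; apply: eq_bigr => l _.
  rewrite /O; case lk: (l < k)%N => //=; case: (w l).2 => //=.
  case: ltngtP => // E; exfalso.
  have lk' : l = k by apply: (@perm_inj _ s); apply: val_inj.
  by move: lk; rewrite lk' ltnn.
have h2 : nodd_before (wact w s) (s k) = (y + x2)%N.
  rewrite /nodd_before card_setE (reindex_inj (@perm_inj _ s)) /=.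
  rewrite -big_split /=; apply: eq_bigr => l _.
  rewrite wact_s /O; case: (w l).2; rewrite /= ?andbF //.
  case: (ltngtP l k) => E /=; rewrite ?andbT ?andbF ?addn0 //.
  have -> : l = k by apply: val_inj.
  by rewrite ltnn.
rewrite /ksign hA h1 h2 -!/(sgn _) -!sgnD.
have -> : (#|[set ab : 'I_j * 'I_j |
              [&& (ab.1 < ab.2)%N, (seteven w k ab.1).2, (seteven w k ab.2).2
                & (s ab.2 < s ab.1)%N]]| + x1 + x2 + (y + x2) =
  (y + x1 + #|[set ab : 'I_j * 'I_j |
              [&& (ab.1 < ab.2)%N, (seteven w k ab.1).2, (seteven w k ab.2).2
                & (s ab.2 < s ab.1)%N]]|) + (x2 + x2))%N by lia.
by rewrite sgnD addnn -mul2n /sgn exprM sqrrN expr1n mulr1.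
Qed.


Lemma sp_act0 (s : 'S_j) : sp_act (0 : P j) s = 0.
Proof.
have h := sp_actlin s 1 (0 : P j) 0; rewrite !scale1r addr0 in h.
by apply: (addrI (sp_act (0 : P j) s)); rewrite addr0 -h.
Qed.
Lemma sp_actZ (s : 'S_j) (a : rat) (p : P j) : sp_act (a *: p) s = a *: sp_act p s.
Proof. by have h := sp_actlin s a p 0; rewrite !addr0 sp_act0 addr0 in h. Qed.

Lemma relgenZ (s : 'S_j) w (p : P j) (a : rat) :
  a *: relgen s w p = relgen s w (a *: p).
Proof. by rewrite /relgen sp_actZ !ptZ scalerBr !scalerA mulrC. Qed.

Lemma inK_j0 : inK_j (0 : T P n j).
Proof. by exists [::]; rewrite big_nil. Qed.
Lemma inK_jD (c1 c2 : T P n j) : inK_j c1 -> inK_j c2 -> inK_j (c1 + c2).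
Proof. by move=> [l1 ->] [l2 ->]; exists (l1 ++ l2); rewrite big_cat. Qed.
Lemma inK_jZ (a : rat) (c : T P n j) : inK_j c -> inK_j (a *: c).
Proof.
move=> [l ->]; exists [seq (x.1.1, x.1.2, a *: x.2) | x <- l].
by rewrite big_map scaler_sumr; apply: eq_bigr => x _; rewrite relgenZ.
Qed.
Lemma inK_j_relgen (s : 'S_j) w (p : P j) : inK_j (relgen s w p).
Proof. by exists [:: (s, w, p)]; rewrite big_seq1. Qed.
Lemma inK_j_sum (I : Type) (r : seq I) (Q : pred I) (F : I -> T P n j) :
  (forall i, Q i -> inK_j (F i)) -> inK_j (\sum_(i <- r | Q i) F i).
Proof. by move=> h; apply: (big_ind (@inK_j P n j)) => //; [exact: inK_j0|exact: inK_jD]. Qed.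

Lemma hT_relgen (s : 'S_j) w (p : P j) :
  hT (relgen s w p) =
  \sum_(k < j | (w k).2) relgen s (seteven w k) (sgn (nodd_before w k) *: p).
Proof.
rewrite /relgen hTB hTZ !hT_pt (reindex_inj (@perm_inj _ s)) /=.
under eq_bigl => k do rewrite wact_s.
under eq_bigr => k _ do rewrite seteven_wact.
rewrite scaler_sumr -sumrB; apply: eq_bigr => k wk.
by rewrite sp_actZ !ptZ !scalerA sign_id // [in RHS]mulrC.
Qed.

Lemma inK_j_hT (c : T P n j) : inK_j c -> inK_j (hT c).
Proof.
move=> [l ->]; rewrite hT_sum; apply: inK_j_sum => x _.
by rewrite hT_relgen; apply: inK_j_sum => k _; exact: inK_j_relgen.
Qed.

End Aux.

Lemma dTZ (P : species) n j (a : rat) (c : T P n j) : dT (a *: c) = a *: dT c.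
Proof.
apply/ffunP=> v; rewrite ffunE !dT_coef scaler_sumr; apply: eq_bigr => k _.
by rewrite ffunE !scalerA mulrC.
Qed.
Lemma dT0 (P : species) n j : dT (0 : T P n j) = 0.
Proof. by apply/ffunP=> v; rewrite dT_coef ffunE big1 // => k _; rewrite ffunE scaler0. Qed.

Unset Implicit Arguments.

Theorem lemma6p2 (P : species) (n : nat) :
  (forall p : P 0%N, p = 0) -> (0 < n)%N ->
  (forall c : Om P n, finsupp c -> homog 0 c -> inK (dOm c) -> inK c) /\
  (forall (k : nat) (c : Om P n), finsupp c -> homog k.+1 c -> inK (dOm c) ->
     exists b : Om P n,
       [/\ finsupp b, homog k b & inK (fun j => c j - dOm b j)]).
Proof.
move=> P0 _.
have T0 : forall x : T P n 0, x = 0.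
  by move=> x; apply/ffunP=> w; rewrite ffunE; apply: P0.
have jn0 : forall j, (0 < j)%N -> (j%:R : rat) != 0.
  by move=> j; rewrite pnatr_eq0 -lt0n.
split.
  move=> c _ hc hdc j; case: j => [|j]; first by rewrite (T0 (c 0%N)); exact: inK_j0.
  have hc0 : hT (c j.+1) = 0.
    apply/ffunP=> v; rewrite !ffunE big1 // => k _.
    case: (eqVneq (c j.+1 (setodd v k)) 0) => [->|/hc]; first by rewrite scaler0.
    by rewrite (nodd_seteven _ k) setodd_k addn1.
  have H := homotopy (c j.+1); rewrite hc0 dT0 add0r in H.
  rewrite -[c j.+1]scale1r -(mulVf (jn0 j.+1 isT)) -scalerA -H.
  by apply: inK_jZ; apply: inK_j_hT; exact: hdc.
move=> k c [N HN] hc hdc.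
exists (fun j => j%:R^-1 *: hT (c j)); split.
- by exists N => j hj; rewrite HN // hT0 scaler0.
- move=> j w; rewrite !ffunE => H; apply/eqP; apply: contraNT H => Hk.
  rewrite big1 ?scaler0 // => l wl.
  case: (eqVneq (c j (setodd w l)) 0) => [->|/hc]; first by rewrite scaler0.
  rewrite (nodd_seteven _ l) setodd_k seteven_odd seteven_id // addn1 => -[E].
  by rewrite E eqxx in Hk.
- move=> j; rewrite /dOm /=; case: j => [|j]; first by rewrite (T0 (_ - _)); exact: inK_j0.
  have H := homotopy (c j.+1).
  have e : dT (hT (c j.+1)) = j.+1%:R *: c j.+1 - hT (dT (c j.+1)) by rewrite -H addrK.
  rewrite dTZ e scalerBr scalerA mulVf ?jn0 // scale1r opprB addrC subrK.
  by apply: inK_jZ; apply: inK_j_hT; exact: hdc.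
Qed.
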